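(* If $S$ is an IP-regular partial semigroup with only finitely many idempotent elements, then every nonprincipal strongly productive ultrafilter on $S$ is regular.
   Context: A partial semigroup is a set $P$ with a partially defined multiplication such that $(ab)c=a(bc)$ whenever both sides are defined. Any subset $X\subseteq P$ is a partial semigroup with the restricted operation ($ab$ defined in $X$ iff $a,b\in X$ and $ab$ is defined in $P$ and lies in $X$). An element $a$ is idempotent if $aa$ is defined and equals $a$; $E(P)$ is the set of idempotents. For a sequence $\vec{x}=(x_n)_{n\in\omega}$ in $P$ such that all products $\prod_{i\in a}x_i$ (increasing order of indices, $a$ finite nonempty subset of $\omega$) are defined, $\mathrm{FP}(\vec{x})$ is the set of these products and $\mathrm{FP}_k(\vec{x})=\mathrm{FP}((x_{n+k})_n)$. A subset of $P$ is an IP-set if it contains such an $\mathrm{FP}(\vec{x})$. An ultrafilter $p$ on $P$ is strongly productive if every $A\in p$ contains some $\mathrm{FP}(\vec{x})\in p$; a nonprincipal strongly productive $p$ is regular if some $B\in p$ has the property that whenever all finite products of $\vec{x}$ are defined and lie in $B$, the set $x_0\mathrm{FP}_1(\vec{x})$ is not in $p$. $P$ is strongly IP-regular if for every sequence $\vec{x}$ in $P$ all of whose finite products are defined, the set $x_0\mathrm{FP}_1(\vec{x})$ is not an IP-set (in $P$). $P$ is IP-regular if $P\setminus E(P)$ is a union of finitely many subsets each of which is strongly IP-regular (with the induced partial semigroup structure). *)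

(* Defs.v *)
From Stdlib Require Import List Sorted Arith.
Import ListNotations.
Set Implicit Arguments.

Section PS.
Variable T : Type.
(* partial multiplication: [mul a b = Some c] means ab is defined and equals c *)
Variable mul : T -> T -> option T.

Definition partial_assoc : Prop :=
  forall a b c ab bc d e,
    mul a b = Some ab -> mul ab c = Some d ->
    mul b c = Some bc -> mul a bc = Some e -> d = e.

Definition idempotent (a : T) : Prop := mul a a = Some a.

(* Induced partial semigroup on a subset X : ab defined in X iff a,b in X,
   ab defined in P and ab in X.  The whole P is X = fun _ => True. *)
Definition mulin (X : T -> Prop) (a b c : T) : Prop :=
  X a /\ X b /\ mul a b = Some c /\ X c.

Definition Pfull : T -> Prop := fun _ => True.

(* [lprod X x l z]: the product of x_i (i in l, in the order of l),
   bracketed to the left, is defined in X and equals z. *)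
Inductive lprod (X : T -> Prop) (x : nat -> T) : list nat -> T -> Prop :=
| lprod1 : forall i, X (x i) -> lprod X x [i] (x i)
| lprodS : forall l i p q, lprod X x l p -> mulin X p (x i) q ->
           lprod X x (l ++ [i]) q.

(* finite nonempty subsets of omega = nonempty strictly increasing lists *)
Definition fin_index (l : list nat) : Prop := l <> [] /\ Sorted lt l.

Definition FPdef (X : T -> Prop) (x : nat -> T) : Prop :=
  forall l, fin_index l -> exists z, lprod X x l z.

Definition FP (X : T -> Prop) (x : nat -> T) : T -> Prop :=
  fun z => exists l, fin_index l /\ lprod X x l z.

Definition shift (x : nat -> T) (k : nat) : nat -> T := fun n => x (n + k).

Definition x0FP1 (X : T -> Prop) (x : nat -> T) : T -> Prop :=
  fun z => exists y, FP X (shift x 1) y /\ mulin X (x 0) y z.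

Definition IPset (X : T -> Prop) (A : T -> Prop) : Prop :=
  exists y, FPdef X y /\ (forall z, FP X y z -> A z).

Definition strongly_IP_regular (X : T -> Prop) : Prop :=
  forall x, FPdef X x -> ~ IPset X (x0FP1 X x).

Definition IP_regular : Prop :=
  exists Xs : list (T -> Prop),
    (forall t, ~ idempotent t <-> exists X, In X Xs /\ X t) /\
    (forall X, In X Xs -> strongly_IP_regular X).

Definition finitely_many_idempotents : Prop :=
  exists l : list T, forall e, idempotent e -> In e l.

Definition ultrafilter (p : (T -> Prop) -> Prop) : Prop :=
  p (fun _ => True) /\ ~ p (fun _ => False) /\
  (forall A B, p A -> (forall t, A t -> B t) -> p B) /\
  (forall A B, p A -> p B -> p (fun t => A t /\ B t)) /\
  (forall A, p A \/ p (fun t => ~ A t)).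

Definition principal (p : (T -> Prop) -> Prop) : Prop :=
  exists a, forall A, p A <-> A a.

Definition strongly_productive (p : (T -> Prop) -> Prop) : Prop :=
  forall A, p A -> exists x, FPdef Pfull x /\
    (forall z, FP Pfull x z -> A z) /\ p (FP Pfull x).

Definition regular (p : (T -> Prop) -> Prop) : Prop :=
  ~ principal p /\ strongly_productive p /\
  exists B, p B /\ forall x, FPdef Pfull x ->
    (forall z, FP Pfull x z -> B z) -> ~ p (x0FP1 Pfull x).

End PS.

(* Main.v *)
Require Import Defs.
From Stdlib Require Import List.
From Stdlib Require Import Sorted Arith Lia Classical.
Import ListNotations.
Set Implicit Arguments.

Lemma sorted_prefix : forall (l m : list nat), Sorted lt (l ++ m) -> Sorted lt l.
Proof.
  induction l as [|a l IH]; intros m H; simpl in *.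
  - constructor.
  - inversion H; subst. constructor.
    + eapply IH; eauto.
    + destruct l as [|b l']; [constructor|]. simpl in H3. inversion H3; subst. constructor; auto.
Qed.

Lemma sorted_mapS : forall l : list nat, Sorted lt l -> Sorted lt (map (fun n => n + 1) l).
Proof.
  induction 1; simpl; constructor; auto.
  destruct H0; simpl; constructor; lia.
Qed.

Section Aux.
Variable T : Type.
Variable mul : T -> T -> option T.

Lemma lprod_nonnil : forall X x l z, lprod mul X x l z -> l <> [].
Proof. intros X x l z H; destruct H; [discriminate|]. destruct l; discriminate. Qed.

Lemma lprod_mono : forall X x l z, lprod mul X x l z -> lprod mul (@Pfull T) x l z.
Proof.
  induction 1.
  - constructor. exact I.
  - econstructor; eauto. destruct H0 as (_&_&?&_). repeat split; auto.
Qed.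

Lemma lprod_restrict : forall (X : T -> Prop) x,
  (forall z, FP mul (@Pfull T) x z -> X z) ->
  forall l z, lprod mul (@Pfull T) x l z -> fin_index l -> lprod mul X x l z.
Proof.
  intros X x HX. induction 1; intros Hf.
  - constructor. apply HX. exists [i]. split; [|constructor; exact I].
    split; [discriminate|repeat constructor].
  - assert (Hl : fin_index l).
    { split; [eapply lprod_nonnil; eauto|]. eapply sorted_prefix; apply Hf. }
    econstructor; [apply IHlprod; exact Hl|].
    destruct H0 as (_&_&Hm&_). repeat split; auto.
    + apply HX. exists l; split; auto.
    + apply HX. exists [i]. split; [|constructor; exact I].
      split; [discriminate|repeat constructor].
    + apply HX. exists (l ++ [i]). split; auto. econstructor; eauto. repeat split; auto.
Qed.

Lemma lprod_shift : forall X x l z, lprod mul X (shift x 1) l z ->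
  lprod mul X x (map (fun n => n + 1) l) z.
Proof.
  induction 1.
  - simpl. apply (lprod1 mul X x (i + 1)). exact H.
  - rewrite map_app. simpl. econstructor; eauto.
Qed.

Lemma fin_shift : forall l, fin_index l -> fin_index (map (fun n => n + 1) l).
Proof.
  intros l [H1 H2]; split.
  - destruct l; [congruence|discriminate].
  - apply sorted_mapS; auto.
Qed.

Lemma finite_principal : forall (p : (T -> Prop) -> Prop), ultrafilter p ->
  forall l : list T, p (fun t => In t l) -> principal p.
Proof.
  intros p (H1&H2&H3&H4&H5). induction l as [|a l IH]; intros Hp.
  - exfalso. apply H2. eapply H3; [exact Hp|]. simpl; tauto.
  - destruct (H5 (fun t => a = t)) as [Ha|Ha].
    + exists a. intros A; split; intros HA.
      * apply NNPP; intro HnA. apply H2. eapply H3. apply (H4 _ _ HA Ha).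
        intros t [HAt Heq]; subst t; contradiction.
      * eapply H3; [exact Ha|]. intros t Ht; simpl in Ht; subst t; exact HA.
    + apply IH. eapply H3. apply (H4 _ _ Hp Ha). intros t [[?|?] ?]; tauto.
Qed.

Lemma union_in : forall (p : (T -> Prop) -> Prop), ultrafilter p ->
  forall Xs : list (T -> Prop), p (fun t => exists X, In X Xs /\ X t) ->
  exists X, In X Xs /\ p X.
Proof.
  intros p Hu. pose proof Hu as (H1&H2&H3&H4&H5).
  induction Xs as [|X0 Xs IH]; intros Hp.
  - exfalso. apply H2. eapply H3; eauto. intros t (X&[]&_).
  - destruct (H5 X0) as [Ha|Ha].
    + exists X0; simpl; auto.
    + destruct IH as (X&HX&HpX).
      * eapply H3. apply (H4 _ _ Hp Ha). intros t [(X&[?|?]&?) ?]; subst; eauto; tauto.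
      * exists X; simpl; auto.
Qed.

End Aux.

Theorem mainTheorem4 (T : Type) (mul : T -> T -> option T) :
  partial_assoc mul ->
  IP_regular mul ->
  finitely_many_idempotents mul ->
  forall p : (T -> Prop) -> Prop,
    ultrafilter p -> ~ principal p -> strongly_productive mul p ->
    regular mul p.
Proof.
  intros _ (Xs&HXs&HXr) (lE&HE) p Hu Hnp Hsp.
  pose proof Hu as (H1&H2&H3&H4&H5).
  split; [auto|split; [auto|]].
  assert (HnE : p (fun t => ~ idempotent mul t)).
  { destruct (H5 (idempotent mul)) as [Ha|Ha]; auto.
    exfalso. apply Hnp. apply (finite_principal mul Hu lE). eapply H3; eauto. }
  destruct (union_in mul Hu Xs) as (X&HinX&HpX).
  { eapply H3; eauto. intros t Ht. apply HXs; auto. }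
  exists X; split; auto.
  intros x Hdx HFx Hpx.
  destruct (Hsp (fun t => x0FP1 mul (@Pfull T) x t /\ X t)) as (y&Hdy&HFy&_).
  { apply H4; auto. }
  assert (HFyX : forall z, FP mul (@Pfull T) y z -> X z) by (intros z Hz; apply HFy; auto).
  apply (HXr X HinX x).
  - intros l Hl. destruct (Hdx l Hl) as (z&Hz). exists z. apply lprod_restrict; auto.
  - exists y. split.
    + intros l Hl. destruct (Hdy l Hl) as (z&Hz). exists z. apply lprod_restrict; auto.
    + intros z (l&Hl&Hz).
      destruct (HFy z (ex_intro _ l (conj Hl (lprod_mono Hz)))) as ((w&(lw&Hlw&Hw)&Hm)&HzX).
      exists w. split.
      * exists lw. split; auto. apply lprod_restrict; auto.
        intros z' (l'&Hl'&Hz'). apply HFx. exists (map (fun n => n + 1) l').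
        split; [apply fin_shift; auto|apply lprod_shift; auto].
      * destruct Hm as (_&_&Hm&_). repeat split; auto.
        -- apply HFx. exists [0]. split; [split; [discriminate|repeat constructor]|].
           constructor; exact I.
        -- apply HFx. exists (map (fun n => n + 1) lw).
           split; [apply fin_shift; auto|apply lprod_shift; auto].
Qed.
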